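(* (a) For every sequence $C=(C(n):n\in\omega)$ of finite sets and every infinite $Y\subseteq\omega$, there is an infinite $X\subseteq Y$ such that $C$ admits a nice dissection over $X$. (b) Let $K$ be a compactification of a discrete space $D$, and let $D\subseteq X\subseteq K$ be such that every sequence of pairwise disjoint finite nonempty subsets of $D$ has an accumulation point in $\operatorname{CL}(X)$. Then $\operatorname{CL}(X)$ is pseudocompact.
   Context: Given a sequence $C=(C(n):n\in\omega)$ of finite sets and an infinite $X\subseteq\omega$, a nice dissection of $C$ over $X$ is a pair $(U,D)$ of sequences of sets indexed by $\omega$ such that $(U(n):n\in X)$ is increasing (i.e. $U(n)\subseteq U(m)$ for $n<m$ in $X$), the sets $D(n)$, $n\in X$, are pairwise disjoint, and for every $n\in X$, $U(n)\cap D(n)=\emptyset$ and $C(n)=U(n)\cup D(n)$. $\operatorname{CL}(X)$ is the set of nonempty closed subsets of $X$ with the Vietoris topology (generated by $A^+=\{F:F\subseteq A\}$, $A^-=\{F:F\cap A\ne\emptyset\}$, $A$ open); finite nonempty subsets of $D$ are regarded as points of $\operatorname{CL}(X)$. Pseudocompact means every continuous real-valued function is bounded. *)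

(* Defs.v *)
From mathcomp Require Import all_boot all_order all_algebra.
From mathcomp Require Import all_classical all_reals all_analysis.
Set Implicit Arguments. Unset Strict Implicit. Unset Printing Implicit Defensive.
Import Order.TTheory GRing.Theory Num.Theory numFieldNormedType.Exports.
Local Open Scope classical_set_scope.
Local Open Scope ring_scope.

Definition nice_dissection (T : Type) (C : nat -> set T) (X : set nat)
    (U Dd : nat -> set T) : Prop :=
  [/\ (forall n m, X n -> X m -> (n < m)%N -> U n `<=` U m),
      (forall n m, X n -> X m -> n <> m -> Dd n `&` Dd m = set0) &
      (forall n, X n -> U n `&` Dd n = set0 /\ C n = U n `|` Dd n)].

Definition compactification_of_discrete (K : topologicalType) (D : set K) : Prop :=
  [/\ hausdorff_space K, compact [set: K], dense D &
      (forall d, D d -> exists V : set K, open V /\ V `&` D = [set d])].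

Definition relopen (K : topologicalType) (X A : set K) : Prop :=
  exists V : set K, open V /\ A = V `&` X.

Definition CL (K : topologicalType) (X : set K) (F : set K) : Prop :=
  [/\ F `<=` X, F !=set0 & F = closure F `&` X].

(** Subbasic Vietoris sets: (true, A) encodes A^+, (false, A) encodes A^-. *)
Definition vsub (K : topologicalType) (X : set K) (p : bool * set K) : set (set K) :=
  if p.1 then [set F | CL X F /\ F `<=` p.2]
  else [set F | CL X F /\ F `&` p.2 !=set0].

Definition vbasic (K : topologicalType) (X : set K) (s : seq (bool * set K))
  : set (set K) :=
  [set F | CL X F /\ forall p, p \in s -> vsub X p F].

Definition vietoris_open (K : topologicalType) (X : set K) (W : set (set K)) : Prop :=
  W `<=` CL X /\
  forall F, W F -> exists s : seq (bool * set K),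
    [/\ (forall p, p \in s -> relopen X p.2), vbasic X s F & vbasic X s `<=` W].

Definition vietoris_acc_point (K : topologicalType) (X : set K)
    (S : nat -> set K) (G : set K) : Prop :=
  CL X G /\ forall W, vietoris_open X W -> W G ->
    forall m, exists2 n, (m <= n)%N & W (S n).

Definition vietoris_continuous (K : topologicalType) (X : set K) (R : realType)
    (f : set K -> R) : Prop :=
  forall O : set R, open O -> vietoris_open X [set F | CL X F /\ O (f F)].

Definition CL_pseudocompact (K : topologicalType) (X : set K) : Prop :=
  forall (R : realType) (f : set K -> R), vietoris_continuous X f ->
    exists M : R, forall F, CL X F -> `|f F| <= M.

(* Main.v *)
Require Import Defs.
From mathcomp Require Import all_boot all_order all_algebra.
From mathcomp Require Import all_classical all_reals all_analysis.
From mathcomp Require Import lra.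
Local Open Scope classical_set_scope.


Definition unb (Y : set nat) := forall m, exists n, (m <= n)%N /\ Y n.

Lemma inf_unb (Y : set nat) : infinite_set Y -> unb Y.
Proof.
move=> inf m; apply: contrapT => nu; apply: inf.
apply: (sub_finite_set _ (finite_II m)) => n Yn /=.
rewrite ltnNge; apply/negP => mn; apply: nu; by exists n.
Qed.

Lemma unb_inf (Y : set nat) : unb Y -> infinite_set Y.
Proof.
move=> u /finite_seqP[s Ys].
have [n [le Yn]] := u (\max_(i <- s) i).+1.
have : n \in s by rewrite Ys in Yn.
move=> /(@leq_bigmax_seq _ s xpredT (fun i => i)) => /(_ isT) h.
by move: (leq_trans le h); rewrite ltnn.
Qed.

Lemma step_seq (T : eqType) (C : nat -> set T) (s : seq T) (Y : set nat) :
  unb Y -> exists Y', [/\ Y' `<=` Y, unb Y' &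
    forall y, y \in s -> Y' `<=` [set n | C n y] \/ Y' `<=` [set n | ~ C n y]].
Proof.
elim: s Y => [|y s IH] Y uY.
  by exists Y; split => // y.
have [Y1 [sub1 u1 P1]] := IH Y uY.
have [u2|nu2] := pselect (unb (Y1 `&` [set n | C n y])).
  exists (Y1 `&` [set n | C n y]); split => //.
    by move=> n [] /sub1.
  move=> z; rewrite in_cons => /orP[/eqP->|zs]; first by left => n [].
  by case: (P1 z zs) => h; [left|right] => n [] /h.
exists (Y1 `&` [set n | ~ C n y]); split => //.
- by move=> n [] /sub1.
- move=> k; have /existsNP[m /forallNP hm] := nu2.
  have [n [le Yn]] := u1 (maxn k m); exists n; split.
    exact: leq_trans (leq_maxl _ _) le.
  split => // Cn; apply: (hm n); split => //.
  exact: leq_trans (leq_maxr _ _) le.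
- move=> z; rewrite in_cons => /orP[/eqP->|zs]; first by right => n [].
  by case: (P1 z zs) => h; [left|right] => n [] /h.
Qed.

Lemma step_fin (T : Type) (C : nat -> set T) (F : set T) (Y : set nat) :
  finite_set F -> unb Y -> exists Y', [/\ Y' `<=` Y, unb Y' &
    forall y, F y -> Y' `<=` [set n | C n y] \/ Y' `<=` [set n | ~ C n y]].
Proof.
move=> /(@finite_seqP {classic T})[s ->] uY.
have [Y' [h1 h2 h3]] := @step_seq {classic T} C s Y uY.
by exists Y'; split => // y /= ys; apply: h3.
Qed.


Lemma partA (T : Type) (C : nat -> set T) (Y : set nat) :
  (forall n, finite_set (C n)) -> infinite_set Y ->
  exists X : set nat, [/\ X `<=` Y, infinite_set X &
    exists U Dd : nat -> set T, nice_dissection C X U Dd].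
Proof.
move=> finC /inf_unb uY.
have : forall Z : set nat, exists p : nat * set nat, unb Z ->
   [/\ Z p.1, p.2 `<=` Z `&` [set n | (p.1 < n)%N], unb p.2 &
    forall y, C p.1 y -> p.2 `<=` [set n | C n y] \/ p.2 `<=` [set n | ~ C n y]].
  move=> Z; have [uZ|nuZ] := pselect (unb Z); last by exists (0%N, Z).
  have [x [_ Zx]] := uZ 0%N.
  have uZ' : unb (Z `&` [set n | (x < n)%N]).
    move=> m; have [n [le Zn]] := uZ (maxn m x.+1); exists n; split.
      exact: leq_trans (leq_maxl _ _) le.
    by split => //; exact: leq_trans (leq_maxr _ _) le.
  have [Z' [h1 h2 h3]] := @step_fin T C _ _ (finC x) uZ'.
  by exists (x, Z') => _; split.
move=> /choice[h hP].
pose Ys k := iter k (fun Z => (h Z).2) Y.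
pose xs k := (h (Ys k)).1.
have YsS k : Ys k.+1 = (h (Ys k)).2 by [].
have uYs k : unb (Ys k).
  elim: k => [|k IH] //; rewrite YsS; by case: (hP _ IH).
have PYs k := hP _ (uYs k).
have xsY k : Ys k (xs k) by case: (PYs k).
have sYs k : (h (Ys k)).2 `<=` Ys k `&` [set n | (xs k < n)%N] by case: (PYs k).
have pYs k : forall y, C (xs k) y -> (h (Ys k)).2 `<=` [set n | C n y] \/ (h (Ys k)).2 `<=` [set n | ~ C n y] by case: (PYs k).
have decr k j : (k <= j)%N -> Ys j `<=` Ys k.
  elim: j => [|j IH]; first by rewrite leqn0 => /eqP->.
  rewrite leq_eqVlt => /orP[/eqP->//|/IH sub].
  rewrite YsS => n /(sYs j) [] /sub.
  done.
have xsS k : (xs k < xs k.+1)%N.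
  by have := xsY k.+1; rewrite YsS => /(sYs k) [].
have xs_mono i j : (i < j)%N -> (xs i < xs j)%N.
  elim: j => [//|j IH]; rewrite ltnS leq_eqVlt => /orP[/eqP->//|/IH lt].
  exact: ltn_trans lt (xsS j).
have xs_ge k : (k <= xs k)%N.
  elim: k => [//|k IH]; exact: leq_ltn_trans IH (xsS k).
have prop k y : C (xs k) y -> (forall j, (k < j)%N -> C (xs j) y) \/
    (forall j, (k < j)%N -> ~ C (xs j) y).
  move=> Cy; case: (pYs k y Cy) => H; [left|right] => j kj.
    by apply: H; rewrite -YsS; apply: (decr _ _ kj).
  by apply: H; rewrite -YsS; apply: (decr _ _ kj).
pose X := range xs.
have ltX i j : (xs i < xs j)%N -> (i < j)%N.
  move=> lt; rewrite ltnNge; apply/negP => ji.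
  move: ji; rewrite leq_eqVlt => /orP[/eqP ji|/xs_mono]; first by move: lt; rewrite ji ltnn.
  by move=> /(ltn_trans lt); rewrite ltnn.
exists X; split.
- by move=> _ [k _ <-]; have := decr 0%N k isT (xs k) (xsY k).
- apply: unb_inf => m; exists (xs m); split => //; by exists m.
pose U n := [set y | C n y /\ forall m, X m -> (n < m)%N -> C m y].
pose Dd n := [set y | C n y /\ ~ U n y].
exists U, Dd; split.
- move=> n m Xn Xm nm y [Cn H]; split; first exact: H.
  by move=> k Xk mk; apply: H => //; exact: ltn_trans nm mk.
- have key i j : (i < j)%N -> Dd (xs i) `&` Dd (xs j) = set0.
    move=> ij; apply/seteqP; split => // y [[Ci nUi] [Cj nUj]].
    case: (prop i y Ci) => H.
      apply: nUi; split => // _ [k _ <-] /ltX ik; exact: H.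
    exact: H j ij Cj.
  move=> n m [i _ <-] [j _ <-] nm.
  have [ij|ji|eq] := ltngtP i j; first exact: key.
    by rewrite setIC; apply: key.
  by exfalso; apply: nm; rewrite eq.
- move=> n Xn; split.
    by apply/seteqP; split => // y [Uy [_ nU]].
  apply/seteqP; split => y.
    by move=> Cy; have [Uy|nUy] := pselect (U n y); [left|right].
  by case => [[]|[]].
Qed.


Section B.
Variables (K : topologicalType) (X : set K).

Lemma in_consr (q p : bool * set K) s : p \in s -> p \in q :: s.
Proof. by move=> ps; rewrite in_cons ps orbT. Qed.

Lemma plus_nbhd (s : seq (bool * set K)) z :
  (forall p, p \in s -> relopen X p.2) -> X z ->
  (forall p, p \in s -> p.1 -> p.2 z) ->
  exists N, [/\ open N, N z & forall p, p \in s -> p.1 -> N `&` X `<=` p.2].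
Proof.
elim: s => [|q s IH] ro Xz hz.
  by exists setT; split => //; exact: openT.
have [N1 [oN1 N1z H1]] : exists N, [/\ open N, N z & forall p, p \in s -> p.1 -> N `&` X `<=` p.2].
  apply: IH => // p ps; [apply: ro|apply: hz]; exact: in_consr.
have [q1|q1] := boolP q.1.
  have [V [oV qV]] := ro q (mem_head _ _).
  have Vz : V z by move: (hz q (mem_head _ _) q1); rewrite qV => -[].
  exists (N1 `&` V); split => //; first exact: openI.
  move=> p; rewrite in_cons => /orP[/eqP->|ps] p1.
    by rewrite qV => x [[_ Vx] Xx].
  by move=> x [[Nx _] Xx]; apply: H1 => //.
exists N1; split => // p; rewrite in_cons => /orP[/eqP->|ps] p1.
  by rewrite p1 in q1.
exact: H1.
Qed.

Lemma CL_closed (S : set K) : S `<=` X -> S !=set0 -> closed S -> CL X S.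
Proof.
move=> SX S0 /closure_id cS; split => //.
by rewrite -cS; apply/seteqP; split => [x Sx|x []] //; split => //; apply: SX.
Qed.

Lemma CL_closure (A : set K) : A `<=` X -> A !=set0 -> CL X (closure A `&` X).
Proof.
move=> AX [a Aa]; split => //.
  by exists a; split; [exact: subset_closure|exact: AX].
apply/seteqP; split => x.
  by move=> [cx Xx]; split => //; apply: subset_closure.
move=> [cx Xx]; split => //.
have : closure (closure A `&` X) `<=` closure A.
  move=> y cy; rewrite ((closure_id (closure A)).1 (@closed_closure K A)).
  by apply: (closureS _ cy) => w [].
by apply.
Qed.

Lemma vbasic_open (s : seq (bool * set K)) :
  (forall p, p \in s -> relopen X p.2) -> vietoris_open X (vbasic X s).
Proof.
move=> ro; split; first by move=> F [].
by move=> F bF; exists s; split.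
Qed.

End B.
Arguments in_consr {K} q {p s}.


Lemma dense_pick (K : topologicalType) (D X : set K) (s : seq (bool * set K)) F :
  hausdorff_space K -> dense D -> D `<=` X ->
  (forall p, p \in s -> relopen X p.2) -> vbasic X s F ->
  exists S, [/\ finite_set S, S !=set0, S `<=` D & vbasic X s S].
Proof.
move=> hK dD DX ro [CLF hF].
have FX : F `<=` X by case: CLF.
have pick z V : F z -> open V -> V z ->
    exists d, [/\ D d, V d & forall p, p \in s -> p.1 -> p.2 d].
  move=> Fz oV Vz.
  have [N [oN Nz HN]] : exists N, [/\ open N, N z & forall p, p \in s -> p.1 -> N `&` X `<=` p.2].
    apply: plus_nbhd => // [|p ps p1]; first exact: FX.
    by move: (hF p ps); rewrite /vsub p1 => -[_]; apply.
  have [d [[Nd Vd] Dd]] := dD (N `&` V) (ex_intro _ z (conj Nz Vz)) (openI oN oV).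
  exists d; split => // p ps p1; apply: HN => //; split => //; exact: DX.
have cl1 x : closed [set x] := accessible_closed_set1 (hausdorff_accessible hK) (x:=x).
have main : forall s' : seq (bool * set K), (forall p, p \in s' -> p \in s) -> exists S,
    [/\ finite_set S, closed S, S `<=` D, (forall p, p \in s -> p.1 -> S `<=` p.2) &
        (forall p, p \in s' -> ~~ p.1 -> S `&` p.2 !=set0)].
  elim => [|q s' IH] sub.
    exists set0; split => //; [exact: closed0 | by move=> p _ _ x []].
  have [S [fS cS SD Sp Sm]] := IH (fun p ps => sub p (in_consr q ps)).
  have [q1|q1] := boolP q.1.
    exists S; split => // p; rewrite in_cons => /orP[/eqP->|ps] p1.
      by rewrite q1 in p1.
    exact: Sm.
  have qs := sub q (mem_head _ _).
  have [V [oV qV]] := ro q qs.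
  have [z [Fz qz]] : F `&` q.2 !=set0.
    by move: (hF q qs); rewrite /vsub (negbTE q1) => -[].
  have Vz : V z by move: qz; rewrite qV => -[].
  have [d [Dd Vd Hd]] := pick z V Fz oV Vz.
  exists (S `|` [set d]); split.
  - by rewrite finite_setU; split => //; exact: finite_set1.
  - by apply: closedU.
  - by move=> x [/SD|->].
  - by move=> p ps p1 x [/(Sp p ps p1)|->] //; apply: Hd.
  - move=> p; rewrite in_cons => /orP[/eqP->|ps] p1.
      by exists d; split; [right|rewrite qV; split => //; apply: DX].
    by have [x [Sx px]] := Sm p ps p1; exists x; split => //; left.
have [S [fS cS SD Sp Sm]] := main s (fun p ps => ps).
have [z Fz] : F !=set0 by case: CLF.
have [d [Dd _ Hd]] := pick z setT Fz openT I.
have CLS : CL X (S `|` [set d]).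
  apply: CL_closed; last exact: closedU.
    by move=> x [/SD|->] //; apply: DX.
  by exists d; right.
exists (S `|` [set d]); split.
- by rewrite finite_setU; split => //; exact: finite_set1.
- by exists d; right.
- by move=> x [/SD|->].
- split => // p ps; rewrite /vsub; case: ifP => p1; split => //.
    by move=> x [/(Sp p ps p1)|->] //; apply: Hd.
  by have [x [Sx px]] := Sm p ps (negbT p1); exists x; split => //; left.
Qed.


Lemma acc_H (K : topologicalType) (X : set K) (S : nat -> set K) (X' : set nat)
  (U Dd : nat -> set K) (G : set K) :
  nice_dissection S X' U Dd ->
  (forall n, X' n -> CL X (S n)) ->
  G `<=` X ->
  (\bigcup_(n in X') U n `|` G) !=set0 ->
  (forall s : seq (bool * set K), (forall p, p \in s -> relopen X p.2) ->
     (forall p, p \in s -> p.1 -> G `<=` p.2) ->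
     forall m, exists n, [/\ (m <= n)%N, X' n, (forall p, p \in s -> p.1 -> Dd n `<=` p.2) &
        (forall p, p \in s -> ~~ p.1 -> G `&` p.2 !=set0 -> Dd n `&` p.2 !=set0)]) ->
  CL X (closure (\bigcup_(n in X') U n `|` G) `&` X) /\
  forall W, vietoris_open X W -> W (closure (\bigcup_(n in X') U n `|` G) `&` X) ->
    forall m, exists n, [/\ (m <= n)%N, X' n & W (S n)].
Proof.
move=> [Umon Ddis Cdec] CLS GX ne Freq.
set Uinf := \bigcup_(n in X') U n.
set H := closure (Uinf `|` G) `&` X.
have SX n : X' n -> S n `<=` X by move=> Xn; case: (CLS n Xn).
have UX : Uinf `<=` X.
  move=> x [n Xn Ux]; apply: (SX n Xn); rewrite (Cdec n Xn).2; by left.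
have AX : Uinf `|` G `<=` X by move=> x [/UX|/GX].
have CLH : CL X H := @CL_closure K X _ AX ne.
split => // W [WCL WB] WH m.
have [s [ro bH sW]] := WB H WH.
have unif : forall s' : seq (bool * set K), exists N, forall n, (N <= n)%N -> X' n ->
    forall p, p \in s' -> ~~ p.1 -> Uinf `&` p.2 !=set0 -> U n `&` p.2 !=set0.
  elim => [|q s' [N1 HN1]]; first by exists 0%N.
  have [qm|qm] := pselect (~~ q.1 /\ Uinf `&` q.2 !=set0).
    case: qm => q1 [y [[n0 Xn0 Uy] qy]].
    exists (maxn N1 n0) => n le Xn p; rewrite in_cons => /orP[/eqP->|ps] p1 pm.
      exists y; split => //.
      have : (n0 <= n)%N by exact: leq_trans (leq_maxr _ _) le.
      rewrite leq_eqVlt => /orP[/eqP<-//|lt].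
      exact: Umon n0 n Xn0 Xn lt y Uy.
    by apply: HN1 => //; exact: leq_trans (leq_maxl _ _) le.
  exists N1 => n le Xn p; rewrite in_cons => /orP[/eqP->|ps] p1 pm.
    by exfalso; apply: qm.
  exact: HN1.
have [N HN] := unif s.
have GH : G `<=` H by move=> x Gx; split; [apply: subset_closure; right|apply: GX].
have Gp : forall p, p \in s -> p.1 -> G `<=` p.2.
  move=> p ps p1; move: (bH.2 p ps); rewrite /vsub p1 => -[_ Hp].
  by move=> x /GH /Hp.
have [n [le Xn Dp Dm]] := Freq s ro Gp (maxn m N).
exists n; split => //; first exact: leq_trans (leq_maxl _ _) le.
apply: sW; split; first exact: CLS.
move=> p ps; move: (bH.2 p ps); rewrite /vsub; case: ifP => p1 [_ Hp]; split => //;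
  try exact: CLS.
- rewrite (Cdec n Xn).2 => x [Ux|Dx]; last exact: Dp p ps p1 x Dx.
  apply: Hp; split; last by apply: UX; exists n.
  by apply: subset_closure; left; exists n.
- have [h [[ch Xh] ph]] := Hp.
  have [V [oV pV]] := ro p ps.
  have Vh : V h by move: ph; rewrite pV => -[].
  have [y [[Uy|Gy] Vy]] := ch V (open_nbhs_nbhs (conj oV Vh)).
    have py : p.2 y by rewrite pV; split => //; apply: UX.
    have [x [Ux px]] := HN n (leq_trans (leq_maxr _ _) le) Xn p ps (negbT p1) (ex_intro _ y (conj Uy py)).
    by exists x; split => //; rewrite (Cdec n Xn).2; left.
  have py : p.2 y by rewrite pV; split => //; apply: GX.
  have [x [Dx px]] := Dm p ps (negbT p1) (ex_intro _ y (conj Gy py)).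
  by exists x; split => //; rewrite (Cdec n Xn).2; right.
Qed.

Import Order.TTheory GRing.Theory Num.Theory numFieldNormedType.Exports.
Section PB.
Local Open Scope ring_scope.

Lemma partB (K : topologicalType) (D X : set K) :
  compactification_of_discrete D -> D `<=` X ->
  (forall S : nat -> set K,
      (forall n, [/\ finite_set (S n), S n !=set0 & S n `<=` D]) ->
      (forall n m, n <> m -> S n `&` S m = set0) ->
      exists G, vietoris_acc_point X S G) ->
  CL_pseudocompact X.
Proof.
move=> [hK _ dD _] DX hacc R f fc.
apply: contrapT => nb.
have unbd (n : nat) : exists F, CL X F /\ (n%:R < `|f F|)%R.
  apply: contrapT => h; apply: nb; exists n%:R => F CLF.
  rewrite leNgt; apply/negP => lt; apply: h; by exists F.
have pickS (n : nat) : exists S, [/\ finite_set S, S !=set0, S `<=` D, CL X S & (n%:R < `|f S|)%R].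
  have [F [CLF ltF]] := unbd n.
  pose O := [set r : R | n%:R < r]%R `|` [set r : R | r < - n%:R]%R.
  have oO : open O by apply: openU; [exact: open_gt|exact: open_lt].
  have [WCL WB] := fc O oO.
  have OF : O (f F).
    move: ltF; rewrite ltr_normr => /orP[h|h]; [left|right] => /=; lra.
  have [s [ro bF sW]] := WB F (conj CLF OF).
  have [S [fS S0 SD bS]] := dense_pick _ _ _ _ _ hK dD DX ro bF.
  have [CLS OS] := sW S bS.
  exists S; split => //.
  have := ler_norm (f S); have := ler_norm (- f S); rewrite normrN.
  case: OS => /= h; lra.
have /choice[Sq Sqp] := pickS.
have finSq n : finite_set (Sq n) by case: (Sqp n).
have [X' [_ infX [U [Dd nd]]]] := @partA _ Sq setT finSq infinite_nat.
have uX := inf_unb _ infX.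
have CLSq n : X' n -> CL X (Sq n) by move=> _; case: (Sqp n).
have [Umon Ddis Cdec] := nd.
have SqD n : Sq n `<=` D by case: (Sqp n).
have Sq0 n : Sq n !=set0 by case: (Sqp n).
have [G [GX ne Freq]] : exists G : set K, [/\ G `<=` X,
  (\bigcup_(n in X') U n `|` G) !=set0 &
  (forall s : seq (bool * set K), (forall p, p \in s -> relopen X p.2) ->
     (forall p, p \in s -> p.1 -> G `<=` p.2) ->
     forall m, exists n, [/\ (m <= n)%N, X' n, (forall p, p \in s -> p.1 -> Dd n `<=` p.2) &
        (forall p, p \in s -> ~~ p.1 -> G `&` p.2 !=set0 -> Dd n `&` p.2 !=set0)])].
  have [P|nP] := pselect (forall m, exists n, [/\ (m <= n)%N, X' n & Dd n !=set0]).
    have /choice[nx hnx] : forall m, exists n, [/\ (m < n)%N, X' n & Dd n !=set0].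
      by move=> m; apply: P m.+1.
    pose e k := iter k.+1 nx 0%N.
    have eS k : e k.+1 = nx (e k) by [].
    have eX k : X' (e k) by case: (hnx (iter k nx 0%N)).
    have e0 k : Dd (e k) !=set0 by case: (hnx (iter k nx 0%N)).
    have elt k : (e k < e k.+1)%N by rewrite eS; case: (hnx (e k)).
    have emono i j : (i < j)%N -> (e i < e j)%N.
      elim: j => [//|j IH]; rewrite ltnS leq_eqVlt => /orP[/eqP->//|/IH lt].
      exact: ltn_trans lt (elt j).
    have ege k : (k <= e k)%N.
      elim: k => [//|k IH]; exact: leq_ltn_trans IH (elt k).
    have DdSq n : X' n -> Dd n `<=` Sq n by move=> Xn x Dx; rewrite (Cdec n Xn).2; right.
    have [G [CLG accG]] : exists G, vietoris_acc_point X (fun k => Dd (e k)) G.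
      apply: hacc.
        move=> k; split; [|exact: e0|].
          exact: sub_finite_set (DdSq _ (eX k)) (finSq _).
        by move=> x /(DdSq _ (eX k)) /SqD.
      move=> k l kl; apply: Ddis; [exact: eX|exact: eX|].
      move=> ekl; apply: kl; have [lt|lt|//] := ltngtP k l.
        by move: (emono _ _ lt); rewrite ekl ltnn.
      by move: (emono _ _ lt); rewrite ekl ltnn.
    have GX : G `<=` X by case: CLG.
    exists G; split => //.
      by case: CLG => _ [g Gg] _; exists g; right.
    move=> s ro Gp m.
    pose sG := [seq p <- s | p.1 || `[< G `&` p.2 !=set0 >]].
    have sGs p : p \in sG -> p \in s by rewrite mem_filter => /andP[].
    have oW : vietoris_open X (vbasic X sG).
      by apply: vbasic_open => p /sGs; apply: ro.
    have WG : vbasic X sG G.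
      split => // p; rewrite mem_filter => /andP[/orP[p1|/asboolP gp] ps]; rewrite /vsub.
        by rewrite p1; split => //; apply: Gp.
      by case: ifP => p1; split => //; apply: Gp.
    have [k le [_ Wk]] := accG _ oW WG m.
    exists (e k); split => //.
    - exact: leq_trans le (ege k).
    - move=> p ps p1; have : p \in sG by rewrite mem_filter p1 ps.
      by move=> /Wk; rewrite /vsub p1 => -[].
    - move=> p ps p1 gp; have : p \in sG.
        by rewrite mem_filter ps andbT; apply/orP; right; apply/asboolP.
      by move=> /Wk; rewrite /vsub (negbTE p1) => -[].
  have [m0 hm0] : exists m0, forall n, (m0 <= n)%N -> X' n -> ~ (Dd n !=set0).
    have /existsNP[m0 hm] := nP; exists m0 => n le Xn ne; apply: hm; by exists n.
  exists set0; split => //.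
    have [n [le Xn]] := uX m0.
    have [x Sx] := Sq0 n; move: Sx; rewrite (Cdec n Xn).2 => -[Ux|Dx].
      by exists x; left; exists n.
    by exfalso; apply: (hm0 n le Xn); exists x.
  move=> s ro Gp m; have [n [le Xn]] := uX (maxn m m0).
  exists n; split => //.
  - exact: leq_trans (leq_maxl _ _) le.
  - move=> p _ _ x Dx; exfalso; apply: (hm0 n _ Xn); last by exists x.
    exact: leq_trans (leq_maxr _ _) le.
  - by move=> p _ _ [x [[]]].
have [CLH accH] := @acc_H _ _ _ _ _ _ _ nd CLSq GX ne Freq.
set H := closure _ `&` X in CLH accH.
pose O := [set r : R | r < f H + 1]%R `&` [set r : R | f H - 1 < r]%R.
have oO : open O by apply: openI; [exact: open_lt|exact: open_gt].
have WH : [set F | CL X F /\ O (f F)] H.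
  by split => //; rewrite /O /=; split; lra.
have [m hm] : exists m : nat, (`|f H| + 1 < m%:R)%R.
  by exists (Num.Def.archi_bound (`|f H| + 1)); apply: archi_boundP; have := normr_ge0 (f H); lra.
have [n [le Xn WSn]] := accH _ (fc O oO) WH m.
case: WSn => _ [hO1 hO2].
have := Sqp n => -[_ _ _ _ ltSn].
have mn : (m%:R <= n%:R :> R)%R by rewrite ler_nat.
have a1 := ler_norm (f H); have a2 := ler_norm (- f H); rewrite normrN in a2.
move: hO1 hO2 => /= hO1 hO2.
have a3 : (`|f (Sq n)| < `|f H| + 1)%R.
  rewrite ltr_norml; apply/andP; split; lra.
lra.
Qed.
End PB.

Theorem lemma4p4 :
  (forall (T : Type) (C : nat -> set T) (Y : set nat),
      (forall n, finite_set (C n)) -> infinite_set Y ->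
      exists X : set nat, [/\ X `<=` Y, infinite_set X &
        exists U Dd : nat -> set T, nice_dissection C X U Dd])
  /\
  (forall (K : topologicalType) (D X : set K),
      compactification_of_discrete D -> D `<=` X -> X `<=` [set: K] ->
      (forall S : nat -> set K,
          (forall n, [/\ finite_set (S n), S n !=set0 & S n `<=` D]) ->
          (forall n m, n <> m -> S n `&` S m = set0) ->
          exists G, vietoris_acc_point X S G) ->
      CL_pseudocompact X).
Proof.
split.
  by move=> T C Y finC infY; exact: (@partA T C Y finC infY).
by move=> K D X cD DX _ hacc; exact: (@partB K D X cD DX hacc).
Qed.
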